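(* Let $m\ge0$, let $f:\mathbb{R}^n\to\mathbb{R}$ be $m$-weakly convex, let $\rho>0$, $\alpha=m+\rho$, $\beta\in(0,1)$, and $x_k\in\mathbb{R}^n$. Let $\tilde f:\mathbb{R}^n\to\mathbb{R}$ be convex with $\tilde f(x)\le f(x)+\frac m2\|x-x_k\|^2$ for all $x$, let $z_{k+1}=\arg\min_x\{\tilde f(x)+\frac{\rho}{2}\|x-x_k\|^2\}$, $\tilde g_{k+1}:=\alpha(x_k-z_{k+1})$ and $\epsilon_{k+1}:=f(z_{k+1})+\frac m2\|z_{k+1}-x_k\|^2-\tilde f(z_{k+1})$. Suppose $$f(x_k)-\Big(f(z_{k+1})+\frac m2\|z_{k+1}-x_k\|^2\Big)\ge\beta\big(f(x_k)-\tilde f(z_{k+1})\big).$$ Then $\tilde g_{k+1}\in\partial_{\epsilon_{k+1}}f(z_{k+1})$ and $$f(z_{k+1})\le f(x_k)-\frac{m+\beta\rho}{\alpha}\cdot\frac{1}{2\alpha}\|\tilde g_{k+1}\|^2,\qquad \epsilon_{k+1}\le\frac{1-\beta}{\beta}\Big(f(x_k)-f(z_{k+1})-\frac{m}{2\alpha^2}\|\tilde g_{k+1}\|^2\Big).$$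
   Context: A function $f$ is $m$-weakly convex ($m\ge 0$) if $x\mapsto f(x)+\frac{m}{2}\|x\|^2$ is convex. For $\epsilon\ge 0$, the $\epsilon$-inexact subdifferential at $x$ is $\partial_\epsilon f(x)=\{v\in\mathbb{R}^n: f(y)\ge f(x)+\langle v,y-x\rangle-\frac{m}{2}\|y-x\|^2-\epsilon\ \ \forall y\in\mathbb{R}^n\}$. *)

(* Defs.v *)
From HB Require Import structures.
From mathcomp Require Import all_boot all_order all_algebra.
From mathcomp Require Import reals.
Set Implicit Arguments. Unset Strict Implicit. Unset Printing Implicit Defensive.
Import Order.TTheory GRing.Theory Num.Theory.
Local Open Scope ring_scope.

Section Defs.
Variables (R : realType) (n : nat).
Notation vec := 'rV[R]_n.

Definition edot (u v : vec) : R := \sum_(i < n) u 0 i * v 0 i.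
Definition enorm (u : vec) : R := Num.sqrt (edot u u).

Definition convex_fun (f : vec -> R) : Prop :=
  forall (x y : vec) (t : R), 0 <= t -> t <= 1 ->
    f (t *: x + (1 - t) *: y) <= t * f x + (1 - t) * f y.

Definition weakly_convex (m : R) (f : vec -> R) : Prop :=
  convex_fun (fun x => f x + m / 2 * enorm x ^+ 2).

Definition inexact_subdiff (m : R) (f : vec -> R) (eps : R) (x v : vec) : Prop :=
  forall y : vec, f y >= f x + edot v (y - x) - m / 2 * enorm (y - x) ^+ 2 - eps.

Definition is_argmin (g : vec -> R) (z : vec) : Prop :=
  forall x : vec, g z <= g x.
End Defs.

(* Main.v *)
Require Import Defs.
From HB Require Import structures.
From mathcomp Require Import all_boot all_order all_algebra.
From mathcomp Require Import reals.
From mathcomp Require Import ring lra.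
Import Order.TTheory GRing.Theory Num.Theory.
Local Open Scope ring_scope.

Section Aux.
Variables (R : realType) (n : nat).
Implicit Types (u v w : 'rV[R]_n) (a : R).

Lemma edotC u v : edot u v = edot v u.
Proof. by apply: eq_bigr => i _; rewrite mulrC. Qed.

Lemma edotDl u v w : edot (u + v) w = edot u w + edot v w.
Proof. by rewrite /edot -big_split; apply: eq_bigr => i _; rewrite mxE mulrDl. Qed.

Lemma edotZl a u w : edot (a *: u) w = a * edot u w.
Proof. by rewrite /edot mulr_sumr; apply: eq_bigr => i _; rewrite mxE mulrA. Qed.

Lemma edotNl u w : edot (- u) w = - edot u w.
Proof. by rewrite -scaleN1r edotZl mulN1r. Qed.

Lemma edotDr u v w : edot w (u + v) = edot w u + edot w v.
Proof. by rewrite edotC edotDl !(edotC w). Qed.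

Lemma edotZr a u w : edot w (a *: u) = a * edot w u.
Proof. by rewrite edotC edotZl edotC. Qed.

Lemma edotNr u w : edot w (- u) = - edot w u.
Proof. by rewrite edotC edotNl edotC. Qed.

Lemma edot_ge0 u : 0 <= edot u u.
Proof. by apply: sumr_ge0 => i _; rewrite -expr2 sqr_ge0. Qed.

Lemma enorm2 u : enorm u ^+ 2 = edot u u.
Proof. by rewrite /enorm sqr_sqrtr // edot_ge0. Qed.

Lemma edot0 : edot (0 : 'rV[R]_n) 0 = 0.
Proof. by rewrite -(scale0r (0 : 'rV[R]_n)) edotZl mul0r. Qed.

End Aux.

Lemma subgrad (R : realType) (n : nat) (rho : R) (ft : 'rV[R]_n -> R) (xk z : 'rV[R]_n) :
  0 < rho -> convex_fun ft ->
  is_argmin (fun x => ft x + rho / 2 * enorm (x - xk) ^+ 2) z ->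
  forall y, ft z + rho * edot (xk - z) (y - z) <= ft y.
Proof.
move=> rho0 cvx amin y.
set u := y - z; set v := z - xk.
have hxz : xk - z = - v by rewrite /v opprB.
rewrite hxz edotNl.
set a := ft y - ft z + rho * edot v u.
set c := rho / 2 * edot u u.
have c0 : 0 <= c by apply: mulr_ge0; [lra | exact: edot_ge0].
have key : forall t, 0 < t -> t <= 1 -> 0 <= t * a + t ^+ 2 * c.
  move=> t t0 t1.
  have := cvx y z t (ltW t0) t1.
  have := amin (t *: y + (1 - t) *: z) => /=.
  have -> : t *: y + (1 - t) *: z - xk = t *: u + v.
    by rewrite /u /v scalerBl scale1r scalerBr !addrA [t *: y + z - _]addrAC.
  rewrite -/v; clearbody u v; rewrite !enorm2 edotDl !edotDr !edotZl !edotZr [edot u v]edotC.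
  rewrite /a /c; move=> H1 H2; lra.
suff : 0 <= a by rewrite /a; lra.
rewrite leNgt; apply/negP => a0.
have ca : 0 < c - a by lra.
set t := - a / (c - a).
have ht : t * (c - a) = - a by rewrite /t divfK // gt_eqF.
have t0 : 0 < t by rewrite /t divr_gt0 // oppr_gt0.
have t1 : t <= 1 by rewrite /t ler_pdivrMr // mul1r; lra.
have := key t t0 t1.
rewrite expr2 -mulrA -mulrDr pmulr_rge0 // => H.
have H2 := mulr_ge0 H (ltW ca).
have H3 : c * (t * (c - a)) = c * (- a) by rewrite ht.
have H4 : 0 < a * a by rewrite nmulr_rgt0.
nra.
Qed.

Theorem mainTheorem5 (R : realType) (n : nat) (m rho beta : R)
    (f ftilde : 'rV[R]_n -> R) (xk z : 'rV[R]_n) :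
  0 <= m ->
  weakly_convex m f ->
  0 < rho ->
  0 < beta -> beta < 1 ->
  convex_fun ftilde ->
  (forall x, ftilde x <= f x + m / 2 * enorm (x - xk) ^+ 2) ->
  is_argmin (fun x => ftilde x + rho / 2 * enorm (x - xk) ^+ 2) z ->
  let alpha := m + rho in
  let g := alpha *: (xk - z) in
  let eps := f z + m / 2 * enorm (z - xk) ^+ 2 - ftilde z in
  f xk - (f z + m / 2 * enorm (z - xk) ^+ 2) >= beta * (f xk - ftilde z) ->
  [/\ inexact_subdiff m f eps z g,
      f z <= f xk - (m + beta * rho) / alpha * (1 / (2 * alpha)) * enorm g ^+ 2
    & eps <= (1 - beta) / beta * (f xk - f z - m / (2 * alpha ^+ 2) * enorm g ^+ 2)].
Proof.
move=> m0 _ rho0 b0 b1 cvx hft amin alpha g eps hyp.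
have sg := @subgrad R n rho ftilde xk z rho0 cvx amin.
have a0 : 0 < alpha by rewrite /alpha; lra.
have an0 : alpha != 0 by rewrite gt_eqF.
have e2 : xk - z = - (z - xk) by rewrite opprB.
set D := edot (xk - z) (xk - z).
have hD : enorm (z - xk) ^+ 2 = D by rewrite enorm2 /D e2 edotNl edotNr opprK.
have hg : enorm g ^+ 2 = alpha ^+ 2 * D by rewrite enorm2 /g edotZl edotZr mulrA -expr2.
have D0 : 0 <= D by rewrite /D edot_ge0.
have hxk := sg xk; rewrite -/D in hxk.
have hf := hft xk; rewrite subrr enorm2 edot0 mulr0 addr0 in hf.
split.
- move=> y; have := sg y; have := hft y.
  have e1 : y - xk = (y - z) + (z - xk) by rewrite addrA subrK.
  rewrite /eps /g e1 e2 !enorm2 /alpha.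
  move: (y - z) (z - xk) => u v.
  rewrite !(edotDl, edotDr, edotNl, edotNr, edotZl, edotZr) [edot u v]edotC.
  move=> H1 H2; lra.
- rewrite hg.
  have -> : (m + beta * rho) / alpha * (1 / (2 * alpha)) * (alpha ^+ 2 * D)
            = (m + beta * rho) / 2 * D by field.
  rewrite hD in hyp.
  have H : beta * (rho * D) <= beta * (f xk - ftilde z) by rewrite ler_pM2l //; lra.
  have H' : 0 <= beta * (rho * D) by apply: mulr_ge0; [exact: ltW | apply: mulr_ge0 => //; exact: ltW].
  lra.
- rewrite hg.
  have -> : m / (2 * alpha ^+ 2) * (alpha ^+ 2 * D) = m / 2 * D by field.
  rewrite /eps hD in hyp *.
  set A := f xk - f z - m / 2 * D.
  have -> : (1 - beta) / beta * A = A / beta - A by field; rewrite gt_eqF.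
  have : f xk - ftilde z <= A / beta by rewrite ler_pdivlMr // mulrC /A; lra.
  rewrite /A; lra.
Qed.
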